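(* Let $\Gamma$ be a group and $\alpha<\mathrm{Lit}(\Gamma)$. Then there exist finite symmetric sets $S\subseteq\Gamma$ of arbitrarily large cardinality such that $\mathrm{Cay}(\Gamma,S)$ is $\sqrt[\alpha]{|S|}$-colourable.
   Context: $T_1(\Gamma)$ is the space of all $f\colon\Gamma\to\mathbf{C}$ for which there exist $f_1,f_2\colon\Gamma\times\Gamma\to\mathbf{C}$ with $f(x^{-1}y)=f_1(x,y)+f_2(x,y)$ for all $x,y$, $\sup_x\sum_y|f_1(x,y)|<\infty$, $\sup_y\sum_x|f_2(x,y)|<\infty$; $\mathrm{Lit}(\Gamma)=\inf\{p>0:T_1(\Gamma)\subseteq\ell^p(\Gamma)\}$. $\mathrm{Cay}(\Gamma,S)$ is the graph with vertex set $\Gamma$ and an edge between $g$ and $gs$ for each $s\in S$. For a real number $t$, a graph is called $t$-colourable if its vertices can be coloured with $\lfloor t\rfloor$ colours so that adjacent vertices get different colours. *)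

(* Defs.v *)
From Stdlib Require Import Reals List ZArith.
From Coquelicot Require Import Coquelicot.

Open Scope R_scope.

Record Group := {
  carrier :> Type;
  gmul : carrier -> carrier -> carrier;
  ginv : carrier -> carrier;
  gone : carrier;
  gmul_assoc : forall x y z, gmul x (gmul y z) = gmul (gmul x y) z;
  gmul_1l : forall x, gmul gone x = x;
  gmul_Vl : forall x, gmul (ginv x) x = gone
}.

Definition lsum {T : Type} (g : T -> R) (s : list T) : R :=
  fold_right Rplus 0 (map g s).

(* sum_y g y < oo for g >= 0 (unordered sum): bounded finite partial sums *)
Definition abs_summable_bound {T : Type} (g : T -> C) (M : R) : Prop :=
  forall s : list T, NoDup s -> lsum (fun y => Cmod (g y)) s <= M.

Definition T1 (G : Group) (f : G -> C) : Prop :=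
  exists f1 f2 : G -> G -> C,
    (forall x y : G, f (gmul G (ginv G x) y) = Cplus (f1 x y) (f2 x y)) /\
    (exists M, forall x : G, abs_summable_bound (fun y => f1 x y) M) /\
    (exists M, forall y : G, abs_summable_bound (fun x => f2 x y) M).

Definition rpow (a p : R) : R :=
  if Req_EM_T a 0 then 0 else Rpower a p.

Definition in_lp (G : Group) (p : R) (f : G -> C) : Prop :=
  exists M, forall s : list G, NoDup s ->
    lsum (fun x => rpow (Cmod (f x)) p) s <= M.

Definition Lit (G : Group) : Rbar :=
  Glb_Rbar (fun p => 0 < p /\ forall f : G -> C, T1 G f -> in_lp G p f).

Definition symmetric_set (G : Group) (S : list G) : Prop :=
  forall s, In s S -> In (ginv G s) S.

(* Cay(G,S) is t-colourable: a proper colouring with floor(t) colours *)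
Definition cay_colourable (G : Group) (S : list G) (t : R) : Prop :=
  exists c : G -> nat,
    (forall g : G, (Z.of_nat (c g) < Int_part t)%Z) /\
    (forall (g : G) (s : G), In s S -> c g <> c (gmul G g s)).

(* Main.v *)
Require Import Defs.
From Stdlib Require Import Reals List ZArith Lia Lra ClassicalEpsilon Classical FunctionalExtensionality PropExtensionality.
From Coquelicot Require Import Coquelicot.
Import ListNotations.
Local Open Scope nat_scope.

Definition dec (P : Prop) : bool := if excluded_middle_informative P then true else false.
Lemma decP (P : Prop) : dec P = true <-> P.
Proof. unfold dec; destruct (excluded_middle_informative P); split; intros; try tauto; discriminate. Qed.
Lemma decF (P : Prop) : dec P = false <-> ~ P.
Proof. unfold dec; destruct (excluded_middle_informative P); split; intros; try tauto; discriminate. Qed.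

Lemma decT (P : Prop) : dec P = true -> P. Proof. apply decP. Qed.
Lemma decFn (P : Prop) : dec P = false -> ~ P. Proof. apply decF. Qed.

Definition cnt {V} (P : V -> Prop) (l : list V) : nat := length (filter (fun y => dec (P y)) l).

Fixpoint nsum {V} (g : V -> nat) (l : list V) : nat :=
  match l with [] => 0 | x :: l' => g x + nsum g l' end.

Lemma cnt_nil {V} (P : V -> Prop) : cnt P [] = 0%nat. Proof. reflexivity. Qed.
Lemma cnt_cons {V} (P : V -> Prop) x l : cnt P (x :: l) = ((if dec (P x) then 1 else 0) + cnt P l)%nat.
Proof. unfold cnt; simpl; destruct (dec (P x)); reflexivity. Qed.
Lemma cnt_app {V} (P : V -> Prop) l1 l2 : cnt P (l1 ++ l2) = (cnt P l1 + cnt P l2)%nat.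
Proof. unfold cnt; rewrite filter_app, length_app; reflexivity. Qed.

Lemma cnt_mono {V} (P Q : V -> Prop) l : (forall x, In x l -> P x -> Q x) -> (cnt P l <= cnt Q l)%nat.
Proof.
  induction l as [|x l IH]; intros H; [unfold cnt; simpl; lia|].
  rewrite !cnt_cons.
  assert (IH' := IH (fun y Hy => H y (or_intror Hy))).
  destruct (dec (P x)) eqn:E1; destruct (dec (Q x)) eqn:E2; try lia.
  apply decT in E1. apply decFn in E2. exfalso; apply E2, H; simpl; auto.
Qed.

Lemma cnt_or {V} (P Q : V -> Prop) l : (cnt (fun y => P y \/ Q y) l <= cnt P l + cnt Q l)%nat.
Proof.
  induction l as [|x l IH]; [unfold cnt; simpl; lia|].
  rewrite !cnt_cons.
  destruct (dec (P x \/ Q x)) eqn:E; destruct (dec (P x)) eqn:E1; destruct (dec (Q x)) eqn:E2; try lia.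
  apply decT in E; apply decFn in E1; apply decFn in E2; tauto.
Qed.

Lemma cnt_sum {V} (P : V -> Prop) l : cnt P l = nsum (fun y => if dec (P y) then 1%nat else 0%nat) l.
Proof. induction l; [reflexivity|]. simpl. rewrite cnt_cons, IHl. reflexivity. Qed.

Lemma nsum_ext {V} (g h : V -> nat) l : (forall x, g x = h x) -> nsum g l = nsum h l.
Proof. intros H; induction l; simpl; auto. Qed.

Lemma nsum_plus {V} (g h : V -> nat) l : nsum (fun x => g x + h x)%nat l = (nsum g l + nsum h l)%nat.
Proof. induction l; simpl; lia. Qed.

Lemma nsum_le {V} (g h : V -> nat) l : (forall x, In x l -> (g x <= h x)%nat) -> (nsum g l <= nsum h l)%nat.
Proof. induction l; simpl; intros H; [lia|]. specialize (IHl (fun x Hx => H x (or_intror Hx))). specialize (H a (or_introl eq_refl)). lia. Qed.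

Lemma nsum_const {V} (c : nat) (l : list V) : nsum (fun _ => c) l = (c * length l)%nat.
Proof. induction l; simpl; lia. Qed.

Lemma nsum_swap {V W} (g : V -> W -> nat) (l1 : list V) (l2 : list W) :
  nsum (fun x => nsum (fun y => g x y) l2) l1 = nsum (fun y => nsum (fun x => g x y) l1) l2.
Proof.
  induction l1 as [|a l1 IH]; simpl.
  - induction l2; simpl; lia.
  - rewrite IH. rewrite <- nsum_plus. reflexivity.
Qed.

Lemma nsum_ge_all {V} (g : V -> nat) (m : nat) l : (forall x, In x l -> (m <= g x)%nat) -> (m * length l <= nsum g l)%nat.
Proof. intros H. rewrite <- nsum_const. apply nsum_le. auto. Qed.

Lemma pigeon (l : list nat) (k : nat) : (length l < k)%nat -> exists j, (j < k)%nat /\ ~ In j l.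
Proof.
  intros H. apply NNPP; intros Hn.
  assert (incl (seq 0 k) l).
  { intros j Hj. apply in_seq in Hj. apply NNPP; intros Hj'. apply Hn. exists j; split; [lia|auto]. }
  apply NoDup_incl_length in H0; [|apply seq_NoDup]. rewrite length_seq in H0. lia.
Qed.

Section FinCol.
Variable V : Type.
Variables adj N : V -> V -> Prop.
Variable D : nat.
Hypothesis irr : forall x, ~ adj x x.
Hypothesis orient : forall x y, adj x y -> N x y \/ N y x.
Hypothesis bound : forall v L, NoDup L -> (forall y, In y L -> N v y) -> (length L <= D)%nat.

Lemma cntN_bound v X : NoDup X -> (cnt (N v) X <= D)%nat.
Proof.
  intros HX. unfold cnt. apply (bound v). apply NoDup_filter; auto.
  intros y Hy. apply filter_In in Hy. apply decP. tauto.
Qed.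

Definition deg X v := cnt (fun y => N v y \/ N y v) X.

Lemma sum_deg X : NoDup X -> (nsum (deg X) X <= 2 * D * length X)%nat.
Proof.
  intros HX. unfold deg.
  apply Nat.le_trans with (nsum (fun v => cnt (N v) X + cnt (fun y => N y v) X)%nat X).
  { apply nsum_le. intros. apply cnt_or. }
  rewrite nsum_plus.
  assert (E : nsum (fun v => cnt (fun y => N y v) X) X = nsum (fun y => cnt (N y) X) X).
  { rewrite (nsum_ext _ (fun v => nsum (fun y => if dec (N y v) then 1%nat else 0%nat) X)).
    2:{ intros; apply cnt_sum. }
    rewrite nsum_swap. apply nsum_ext. intros; symmetry; apply cnt_sum. }
  rewrite E.
  assert (nsum (fun v => cnt (N v) X) X <= D * length X)%nat.
  { rewrite <- nsum_const. apply nsum_le. intros. apply cntN_bound; auto. }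
  lia.
Qed.

Lemma exists_low_deg X : NoDup X -> X <> [] -> exists v, In v X /\ (deg X v <= 2*D)%nat.
Proof.
  intros HX Hne. apply NNPP; intros Hn.
  assert (Hall : forall v, In v X -> (S (2*D) <= deg X v)%nat).
  { intros v Hv. apply NNPP; intros Hv'. apply Hn. exists v; split; auto; lia. }
  apply nsum_ge_all in Hall. assert (H2 := sum_deg X HX).
  destruct X; [congruence|]. simpl length in *. lia.
Qed.

Lemma in_split_or (x v : V) l1 l2 : In x (l1 ++ v :: l2) -> x = v \/ In x (l1 ++ l2).
Proof. intros H; apply in_app_or in H; destruct H as [H|[H|H]]; auto using in_or_app. Qed.

Lemma fin_col : forall n X, length X = n -> NoDup X -> exists c : V -> nat,
  (forall v, (c v < 2*D+1)%nat) /\ (forall x y, In x X -> In y X -> adj x y -> c x <> c y).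
Proof.
  induction n as [|n IH]; intros X Hl HX.
  - destruct X; [|discriminate]. exists (fun _ => 0%nat); split; [intros; lia| intros x y []].
  - destruct (exists_low_deg X HX) as [v [Hv Hdeg]]. { intros ->; discriminate. }
    destruct (in_split _ _ Hv) as [l1 [l2 ->]].
    assert (HX' := NoDup_remove_1 _ _ _ HX).
    rewrite length_app in Hl; simpl in Hl.
    destruct (IH (l1 ++ l2)) as [c' [Hc'1 Hc'2]]; [rewrite length_app; lia|auto|].
    set (L := map c' (filter (fun y => dec (adj v y \/ adj y v)) (l1 ++ l2))).
    assert (HL : (length L < 2*D+1)%nat).
    { unfold L. rewrite length_map. fold (cnt (fun y => adj v y \/ adj y v) (l1 ++ l2)).
      apply Nat.le_lt_trans with (deg (l1 ++ v :: l2) v); [|lia].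
      apply Nat.le_trans with (cnt (fun y => adj v y \/ adj y v) (l1 ++ v :: l2)).
      { rewrite !cnt_app, cnt_cons. lia. }
      apply cnt_mono. intros y _ [H|H]; apply orient in H; tauto. }
    destruct (pigeon L _ HL) as [j [Hj HjL]].
    exists (fun u => if excluded_middle_informative (u = v) then j else c' u). split.
    + intros u. destruct (excluded_middle_informative (u = v)); auto.
    + intros x y Hx Hy Hxy.
      destruct (excluded_middle_informative (x = v)) as [Ex|Ex];
      destruct (excluded_middle_informative (y = v)) as [Ey|Ey].
      * subst. exfalso; apply (irr v); auto.
      * subst x. apply in_split_or in Hy. destruct Hy as [Hy|Hy]; [tauto|].
        intros E; apply HjL. unfold L. rewrite E. apply in_map. apply filter_In. split; auto.
        apply decP; auto.
      * subst y. apply in_split_or in Hx. destruct Hx as [Hx|Hx]; [tauto|].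
        intros E; apply HjL. unfold L. rewrite <- E. apply in_map. apply filter_In. split; auto.
        apply decP; auto.
      * apply in_split_or in Hx; apply in_split_or in Hy.
        destruct Hx as [Hx|Hx]; [tauto|]. destruct Hy as [Hy|Hy]; [tauto|]. auto.
Qed.
End FinCol.

Section Compact.
Variable adj : nat -> nat -> Prop.
Variable k : nat.
Definition proper_on (n : nat) (c : nat -> nat) :=
  (forall i, (c i < k)%nat) /\ (forall i j, (i < n)%nat -> (j < n)%nat -> adj i j -> c i <> c j).
Hypothesis Hfin : forall n, exists c, proper_on n c.

Definition ext (s : nat -> nat) (m : nat) :=
  forall n, exists c, proper_on n c /\ (forall i, (i < m)%nat -> c i = s i).

Definition upd (s : nat -> nat) (m j : nat) := fun i => if Nat.eqb i m then j else s i.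

Lemma common_bound (Q : nat -> nat -> Prop) (K : nat) :
  (forall j n n', (n <= n')%nat -> Q j n -> Q j n') ->
  (forall j, (j < K)%nat -> exists n, Q j n) -> exists N, forall j, (j < K)%nat -> Q j N.
Proof.
  intros Hmono. induction K as [|K IH]; intros H.
  - exists 0%nat; intros; lia.
  - destruct IH as [N1 HN1]. { intros j Hj; apply H; lia. }
    destruct (H K) as [N2 HN2]; [lia|].
    exists (Nat.max N1 N2). intros j Hj.
    destruct (Nat.eq_dec j K) as [->|Hne].
    + apply Hmono with N2; [lia|auto].
    + apply Hmono with N1; [lia|]. apply HN1; lia.
Qed.

Lemma ext_step s m : ext s m -> exists j, (j < k)%nat /\ ext (upd s m j) (S m).
Proof.
  intros He. apply NNPP; intros Hn.
  assert (Hall : forall j, (j < k)%nat -> exists n, ~ exists c, proper_on n c /\ (forall i, (i < S m)%nat -> c i = upd s m j i)).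
  { intros j Hj. apply NNPP; intros Hj'. apply Hn. exists j; split; auto.
    intros n. apply NNPP; intros Hn'. apply Hj'. exists n; auto. }
  destruct (common_bound (fun j n => ~ exists c, proper_on n c /\ (forall i, (i < S m)%nat -> c i = upd s m j i)) k) as [N HN].
  { intros j n n' Hle Hq [c [[Hc1 Hc2] Hc3]]. apply Hq. exists c; split; auto.
    split; auto. intros i j' Hi Hj'. apply Hc2; lia. }
  { auto. }
  destruct (He N) as [c [[Hc1 Hc2] Hc3]].
  apply (HN (c m)); auto. exists c. split; [split; auto|].
  intros i Hi. unfold upd. destruct (Nat.eqb_spec i m) as [->|Hne]; auto. apply Hc3; lia.
Qed.

Definition choose_j (s : nat -> nat) (m : nat) : nat :=
  epsilon (inhabits 0%nat) (fun j => (j < k)%nat /\ ext (upd s m j) (S m)).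

Fixpoint sq (m : nat) : nat -> nat :=
  match m with
  | O => fun _ => 0%nat
  | S m' => upd (sq m') m' (choose_j (sq m') m')
  end.

Lemma sq_ext m : ext (sq m) m.
Proof.
  induction m as [|m IH].
  - intros n. destruct (Hfin n) as [c Hc]. exists c; split; auto. intros; lia.
  - simpl. apply (epsilon_spec (inhabits 0%nat) (fun j => (j < k)%nat /\ ext (upd (sq m) m j) (S m))).
    apply ext_step; auto.
Qed.

Lemma sq_stable i m : (i < m)%nat -> sq m i = sq (S i) i.
Proof.
  induction m as [|m IH]; intros H; [lia|].
  destruct (Nat.eq_dec i m) as [->|Hne]; [reflexivity|].
  simpl. unfold upd. destruct (Nat.eqb_spec i m); [lia|]. apply IH; lia.
Qed.

Theorem compactness : exists c, forall i j, (c i < k)%nat /\ (adj i j -> c i <> c j).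
Proof.
  exists (fun i => sq (S i) i). intros i j. split.
  - destruct (sq_ext (S i) (S i)) as [c [[Hc1 _] Hc3]].
    rewrite <- Hc3; auto.
  - intros Hij. set (m := S (Nat.max i j)).
    destruct (sq_ext m m) as [c [[_ Hc2] Hc3]].
    rewrite <- (sq_stable i m), <- (sq_stable j m) by lia.
    rewrite <- !Hc3 by lia. apply Hc2; auto; lia.
Qed.
End Compact.

Section GroupL.
Variable G : Group.
Notation "x * y" := (gmul G x y).
Notation e := (gone G).
Notation "x ^-1" := (ginv G x) (at level 9).

Lemma g_mulV x : x * x^-1 = e.
Proof.
  set (y := x * x^-1).
  assert (Hyy : y * y = y).
  { unfold y. rewrite <- gmul_assoc, (gmul_assoc _ x^-1 x), gmul_Vl, gmul_1l. reflexivity. }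
  assert (H : y^-1 * (y * y) = y^-1 * y) by (rewrite Hyy; reflexivity).
  rewrite gmul_assoc, gmul_Vl, gmul_1l in H. exact H.
Qed.

Lemma g_mul1r x : x * e = x.
Proof. rewrite <- (gmul_Vl G x), gmul_assoc, g_mulV, gmul_1l. reflexivity. Qed.

Lemma g_cancel x y : x^-1 * (x * y) = y.
Proof. rewrite gmul_assoc, gmul_Vl, gmul_1l; reflexivity. Qed.

Lemma g_cancel' x y : x * (x^-1 * y) = y.
Proof. rewrite gmul_assoc, g_mulV, gmul_1l; reflexivity. Qed.

Lemma g_cancel_r x s : (x * s) * s^-1 = x.
Proof. rewrite <- gmul_assoc, g_mulV, g_mul1r; reflexivity. Qed.

Lemma g_inv_e a : a^-1 = e -> a = e.
Proof. intros H. assert (H0 : a * a^-1 = e) by apply g_mulV. rewrite H, g_mul1r in H0. exact H0. Qed.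
End GroupL.

Section Global.
Variable G : Group.
Notation "x * y" := (gmul G x y).
Notation e := (gone G).
Notation "x ^-1" := (ginv G x) (at level 9).
Variable Sl : list G.
Variable k : nat.
Hypothesis Ssym : forall s, In s Sl -> In (s^-1) Sl.
Hypothesis Sne : Sl <> [].
Hypothesis Hloc : forall X : list G, NoDup X -> exists c : G -> nat, (forall v, (c v < k)%nat) /\
   (forall x y, In x X -> In y X -> (exists s, In s Sl /\ y = x * s) -> c x <> c y).

Fixpoint Bl (n : nat) : list G :=
  match n with
  | O => [e]
  | S n' => Bl n' ++ flat_map (fun g => map (fun s => g * s) Sl) (Bl n')
  end.

Lemma Bl_prefix n m : (n <= m)%nat -> exists t, Bl m = Bl n ++ t.
Proof.
  induction 1 as [|m Hnm [t Ht]].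
  - exists []; rewrite app_nil_r; auto.
  - simpl. rewrite Ht. eexists. rewrite <- app_assoc. reflexivity.
Qed.

Lemma Bl_len n : (n < length (Bl n))%nat.
Proof.
  induction n as [|n IH]; simpl; [lia|].
  rewrite length_app. destruct (Bl n) as [|g l]; [simpl in IH; lia|].
  simpl. rewrite length_app, length_map. destruct Sl; [congruence|]. simpl in *. lia.
Qed.

Definition en (i : nat) : G := nth i (Bl i) e.

Lemma en_In n h : In h (Bl n) -> exists i, en i = h.
Proof.
  intros H. destruct (In_nth _ _ e H) as [i [Hi Hn]]. exists i. unfold en.
  destruct (Nat.le_gt_cases i n) as [Hle|Hgt].
  - destruct (Bl_prefix i n Hle) as [t Ht]. rewrite Ht in Hn. rewrite app_nth1 in Hn; auto. apply Bl_len.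
  - destruct (Bl_prefix n i ltac:(lia)) as [t Ht]. rewrite Ht. rewrite app_nth1; auto.
Qed.

Lemma en_in_Bl i : In (en i) (Bl i).
Proof. unfold en. apply nth_In, Bl_len. Qed.

Lemma Bl_step n h s : In h (Bl n) -> In s Sl -> In (h * s) (Bl (S n)).
Proof.
  intros Hh Hs. simpl. apply in_or_app; right. apply in_flat_map. exists h; split; auto.
  apply in_map; auto.
Qed.

Definition inH (h : G) := exists n, In h (Bl n).

Lemma inH_step h s : inH h -> In s Sl -> inH (h * s).
Proof. intros [n Hn] Hs. exists (S n). apply Bl_step; auto. Qed.

Lemma inH_e : inH e.
Proof. exists 0%nat; simpl; auto. Qed.

Definition adjn (i j : nat) := exists s, In s Sl /\ en j = en i * s.

Definition gdec : forall x y : G, {x = y} + {x <> y} := fun x y => excluded_middle_informative (x = y).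

Lemma fin_nat n : exists c, proper_on adjn k n c.
Proof.
  destruct (Hloc (nodup gdec (map en (seq 0 n)))) as [c [Hc1 Hc2]]; [apply NoDup_nodup|].
  exists (fun i => c (en i)). split; auto.
  intros i j Hi Hj Hij. apply Hc2; auto.
  - apply nodup_In, in_map, in_seq; lia.
  - apply nodup_In, in_map, in_seq; lia.
Qed.

Definition rep (g : G) : G := epsilon (inhabits e) (fun r => inH (r^-1 * g)).
Definition idx (h : G) : nat := epsilon (inhabits 0%nat) (fun i => en i = h).

Lemma rep_spec g : inH ((rep g)^-1 * g).
Proof.
  unfold rep. apply (epsilon_spec (inhabits e) (fun r => inH (r^-1 * g))).
  exists g. rewrite gmul_Vl. apply inH_e.
Qed.

Lemma rep_step g s : In s Sl -> rep (g * s) = rep g.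
Proof.
  intros Hs. unfold rep. f_equal. apply functional_extensionality. intros r.
  apply propositional_extensionality. split; intros H.
  - replace (r^-1 * g) with ((r^-1 * (g * s)) * s^-1).
    + apply inH_step; auto.
    + rewrite <- gmul_assoc, g_cancel_r; reflexivity.
  - rewrite gmul_assoc. apply inH_step; auto.
Qed.

Lemma idx_spec h : inH h -> en (idx h) = h.
Proof.
  intros [n Hn]. unfold idx. apply (epsilon_spec (inhabits 0%nat) (fun i => en i = h)).
  apply (en_In n); auto.
Qed.

Theorem global_col : exists c : G -> nat, (forall g, (c g < k)%nat) /\
  (forall g s, In s Sl -> c g <> c (g * s)).
Proof.
  destruct (compactness adjn k fin_nat) as [cn Hcn].
  exists (fun g => cn (idx ((rep g)^-1 * g))). split.
  - intros g. apply (Hcn _ 0%nat).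
  - intros g s Hs. rewrite rep_step by auto.
    apply (Hcn _ _). exists s. split; auto.
    rewrite !idx_spec.
    + rewrite gmul_assoc; reflexivity.
    + apply rep_spec.
    + rewrite gmul_assoc. apply inH_step; auto. apply rep_spec.
Qed.
End Global.

Local Open Scope R_scope.

Lemma ln_le' x y : 0 < x -> x <= y -> ln x <= ln y.
Proof. intros Hx [H|H]; [left; apply ln_increasing; auto| subst; lra]. Qed.

Lemma ln_le_sub1 x : 0 < x -> ln x <= x - 1.
Proof.
  intros Hx. rewrite <- (ln_exp (x - 1)). apply ln_le'; auto.
  generalize (exp_ineq1_le (x - 1)); lra.
Qed.

Lemma key_ineq (q n : R) : 1 < q -> 1 <= n ->
  (q-1)*exp(-q*ln(n+1)) + exp((1-q)*ln(n+1)) <= exp((1-q)*ln n).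
Proof.
  intros Hq Hn.
  set (L := ln (n+1)). set (l := ln n).
  assert (E1 : exp (-q*L) = exp((1-q)*L) * / (n+1)).
  { replace (-q*L) with ((1-q)*L + - L) by ring. rewrite exp_plus, exp_Ropp. unfold L; rewrite exp_ln by lra. reflexivity. }
  assert (E2 : exp ((1-q)*l) = exp((1-q)*L) * exp((q-1)*(L-l))).
  { rewrite <- exp_plus. f_equal. ring. }
  rewrite E1, E2.
  assert (HLl : / (n+1) <= L - l).
  { assert (H := ln_le_sub1 (n / (n+1)) ltac:(apply Rdiv_lt_0_compat; lra)).
    rewrite ln_div in H by lra. fold L l in H.
    replace (n/(n+1) - 1) with (- / (n+1)) in H by (field; lra). lra. }
  assert (Hexp := exp_ineq1_le ((q-1)*(L-l))).
  assert (Hpos := exp_pos ((1-q)*L)).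
  assert (H3 : (q-1) * / (n+1) <= (q-1)*(L-l)) by (apply Rmult_le_compat_l; lra).
  replace ((q - 1) * (exp ((1 - q) * L) * / (n + 1)) + exp ((1 - q) * L))
    with (exp ((1 - q) * L) * (1 + (q-1) * / (n+1))) by ring.
  apply Rmult_le_compat_l; lra.
Qed.

Fixpoint Zs (q : R) (n : nat) : R :=
  match n with O => 0 | S m => Zs q m + exp (-q * ln (INR (S m))) end.

Lemma Zs_bound1 q n : 1 < q -> (1 <= n)%nat ->
  Zs q n <= 1 + 1/(q-1) - exp((1-q)*ln (INR n))/(q-1).
Proof.
  intros Hq. induction n as [|n IH]; intros Hn; [lia|].
  destruct (Nat.eq_dec n 0) as [->|Hn0].
  - simpl. rewrite Rplus_0_l, ln_1, !Rmult_0_r, exp_0. lra.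
  - specialize (IH ltac:(lia)). change (Zs q (S n)) with (Zs q n + exp (-q * ln (INR (S n)))).
    assert (HnR : 1 <= INR n) by (apply (le_INR 1); lia).
    rewrite S_INR.
    assert (K := key_ineq q (INR n) Hq HnR).
    assert (0 < q - 1) by lra.
    apply Rle_trans with (1 + 1 / (q - 1) - exp ((1 - q) * ln (INR n)) / (q - 1) + exp (- q * ln (INR n + 1))); [lra|].
    unfold Rdiv. 
    assert (exp ((1 - q) * ln (INR n)) * / (q-1) >= exp (-q * ln (INR n + 1)) + exp ((1 - q) * ln (INR n + 1)) * / (q-1)).
    { apply Rle_ge. apply Rmult_le_reg_l with (q-1); [lra|].
      field_simplify; [|lra|lra]. lra. }
    lra.
Qed.

Lemma Zs_bound q n : 1 < q -> Zs q n <= 1 + 1/(q-1).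
Proof.
  intros Hq. destruct n as [|n]. { simpl. assert (0 < 1/(q-1)) by (apply Rdiv_lt_0_compat; lra). lra. }
  assert (H := Zs_bound1 q (S n) Hq ltac:(lia)).
  assert (0 < exp ((1 - q) * ln (INR (S n))) / (q - 1)) by (apply Rdiv_lt_0_compat; [apply exp_pos|lra]).
  lra.
Qed.

Definition lsumR {T} := @lsum T.

Lemma lsum_app {T} (g : T -> R) l1 l2 : lsum g (l1 ++ l2) = lsum g l1 + lsum g l2.
Proof. induction l1; unfold lsum in *; simpl; [ring|]. rewrite IHl1; ring. Qed.

Lemma lsum_cons {T} (g : T -> R) x l : lsum g (x :: l) = g x + lsum g l.
Proof. reflexivity. Qed.

Lemma rpow_nonneg a p : 0 <= rpow a p.
Proof. unfold rpow; destruct (Req_EM_T a 0); [lra|]. unfold Rpower; left; apply exp_pos. Qed.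

Lemma rpow_mono a b p : 0 < p -> 0 <= a -> a <= b -> rpow a p <= rpow b p.
Proof.
  intros Hp Ha Hab. unfold rpow at 1. destruct (Req_EM_T a 0); [apply rpow_nonneg|].
  unfold rpow. destruct (Req_EM_T b 0); [lra|]. unfold Rpower.
  destruct (Rle_lt_or_eq_dec _ _ Hab) as [H|H]; [|subst; lra].
  left; apply exp_increasing. apply Rmult_lt_compat_l; auto. apply ln_increasing; lra.
Qed.

Lemma min_exists {T} (g : T -> R) (s : list T) : s <> [] -> exists x, In x s /\ forall y, In y s -> g x <= g y.
Proof.
  induction s as [|a s IH]; intros Hne; [congruence|].
  destruct s as [|b s'].
  - exists a; split; [left; auto|]. intros y [<-|[]]; lra.
  - destruct IH as [x [Hx Hmin]]; [discriminate|].
    destruct (Rle_lt_dec (g a) (g x)).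
    + exists a; split; [left; auto|]. intros y [<-|Hy]; [lra|]. specialize (Hmin y Hy); lra.
    + exists x; split; [right; auto|]. intros y [<-|Hy]; [lra|auto].
Qed.

Section Claim.
Variable G : Group.
Variable f : G -> C.
Variables B p alpha K : R.
Variable N : nat.
Hypothesis Halpha : 0 < alpha.
Hypothesis Hap : alpha < p.
Hypothesis HK : 0 < K.
Hypothesis HB : forall z, Cmod (f z) <= B.

Let q := p / alpha.
Let Cst := exp (p * ln K + q * ln 2).

Lemma q_gt1 : 1 < q.
Proof. unfold q. apply Rmult_lt_reg_r with alpha; auto. unfold Rdiv. rewrite Rmult_assoc, Rinv_l by lra. lra. Qed.

Hypothesis Hcontra : forall eps, 0 < eps -> forall A : list G, NoDup A ->
  (forall a, In a A -> eps <= Cmod (f a)) -> INR (length A) < INR N + Rpower (K / eps) alpha.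

Let rp (x : G) := rpow (Cmod (f x)) p.

Lemma term_big (s : list G) (x : G) (n : nat) : NoDup s -> length s = S n -> (2 * N < S n)%nat ->
  (forall y, In y s -> Cmod (f x) <= Cmod (f y)) ->
  rp x <= Cst * exp (- q * ln (INR (S n))).
Proof.
  intros Hs Hl Hn Hmin. unfold rp, rpow.
  destruct (Req_EM_T (Cmod (f x)) 0) as [E|E].
  { left; apply Rmult_lt_0_compat; apply exp_pos. }
  set (m := Cmod (f x)) in *.
  assert (Hm : 0 < m) by (generalize (Cmod_ge_0 (f x)); fold m; lra).
  assert (H := Hcontra m Hm s Hs Hmin). rewrite Hl in H.
  set (t := INR (S n)) in *.
  assert (Ht : 2 * INR N < t).
  { unfold t. replace 2 with (INR 2) by (simpl; ring). rewrite <- mult_INR. apply lt_INR; lia. }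
  assert (Ht0 : 0 < t) by (generalize (pos_INR N); lra).
  unfold Rpower in H.
  assert (H2 : t / 2 < exp (alpha * ln (K / m))) by lra.
  apply ln_increasing in H2; [|lra]. rewrite ln_exp, ln_div, ln_div in H2 by lra.
  unfold Cst, Rpower. rewrite <- exp_plus. 
  destruct (Rle_lt_dec (p * ln m) (p * ln K + q * ln 2 + - q * ln t)) as [Hle|Hlt]; [|exfalso].
  - destruct Hle as [Hlt|Heq]; [left; apply exp_increasing; auto| right; rewrite Heq; reflexivity].
  - assert (Hq : p = q * alpha) by (unfold q; field; lra).
    rewrite Hq in Hlt.
    assert (0 < q) by (generalize q_gt1; lra).
    assert (q * (ln t - ln 2) < q * (alpha * (ln K - ln m))) by (apply Rmult_lt_compat_l; lra).
    nra.
Qed.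

Lemma sum_bound : forall n s, length s = n -> NoDup s ->
  lsum rp s <= INR (Nat.min n (2*N)) * rpow B p + Cst * Zs q n.
Proof.
  assert (HCst : 0 < Cst) by apply exp_pos.
  assert (HBp := rpow_nonneg B p).
  induction n as [|n IH]; intros s Hl Hs.
  - destruct s; [|discriminate]. simpl. unfold lsum; simpl. lra.
  - destruct (min_exists (fun x => Cmod (f x)) s) as [x [Hx Hmin]]; [intros ->; discriminate|].
    destruct (in_split _ _ Hx) as [l1 [l2 E]]. subst s.
    assert (Hs' := NoDup_remove_1 _ _ _ Hs).
    rewrite length_app in Hl; simpl in Hl.
    assert (IH' := IH (l1 ++ l2) ltac:(rewrite length_app; lia) Hs').
    rewrite lsum_app, lsum_cons. rewrite lsum_app in IH'.
    change (Zs q (S n)) with (Zs q n + exp (-q * ln (INR (S n)))).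
    assert (Hexp := exp_pos (-q * ln (INR (S n)))).
    destruct (Nat.le_gt_cases (S n) (2*N)) as [Hle|Hgt].
    + rewrite (Nat.min_l (S n)) by lia. rewrite (Nat.min_l n) in IH' by lia.
      assert (rp x <= rpow B p).
      { unfold rp. apply rpow_mono; [lra|apply Cmod_ge_0|apply HB]. }
      assert (0 <= Cst * exp (- q * ln (INR (S n)))) by (apply Rmult_le_pos; lra).
      rewrite S_INR in H0 |- *. nra.
    + rewrite (Nat.min_r (S n)) by lia. rewrite (Nat.min_r n) in IH' by lia.
      assert (rp x <= Cst * exp (- q * ln (INR (S n)))).
      { apply (term_big (l1 ++ x :: l2) x n); auto. rewrite length_app; simpl; lia. }
      nra.
Qed.

Lemma in_lp_contra : in_lp G p f.
Proof.
  exists (INR (2*N) * rpow B p + Cst * (1 + 1/(q-1))).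
  intros s Hs. eapply Rle_trans; [apply (sum_bound (length s)); auto|].
  assert (HCst : 0 < Cst) by apply exp_pos.
  assert (HBp := rpow_nonneg B p).
  assert (INR (Nat.min (length s) (2*N)) <= INR (2*N)) by (apply le_INR; lia).
  assert (Zs q (length s) <= 1 + 1/(q-1)) by (apply Zs_bound, q_gt1).
  nra.
Qed.
End Claim.

Lemma level_claim (G : Group) (f : G -> C) (B p alpha K : R) (N : nat) :
  0 < alpha -> alpha < p -> 0 < K -> (forall z, Cmod (f z) <= B) -> ~ in_lp G p f ->
  exists eps, 0 < eps /\ exists A : list G, NoDup A /\ (forall a, In a A -> eps <= Cmod (f a)) /\
    INR N + Rpower (K / eps) alpha <= INR (length A).
Proof.
  intros Ha Hap HK HB Hn. apply NNPP; intros Hc. apply Hn.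
  apply (in_lp_contra G f B p alpha K N Ha Hap HK HB).
  intros eps Heps A HA HAe. apply Rnot_le_lt. intros Hle. apply Hc.
  exists eps; split; auto. exists A; auto.
Qed.

Open Scope R_scope.

Lemma g_inv_inv (G : Group) (x : G) : ginv G (ginv G x) = x.
Proof.
  rewrite <- (g_mul1r G (ginv G (ginv G x))), <- (gmul_Vl G x), gmul_assoc, gmul_Vl, gmul_1l. reflexivity.
Qed.

Lemma lsum_lower {T} (g : T -> R) (c : R) (L : list T) : (forall y, In y L -> c <= g y) ->
  INR (length L) * c <= lsum g L.
Proof.
  induction L as [|a L IH]; intros H; [unfold lsum; simpl; lra|].
  change (INR (S (length L)) * c <= g a + lsum g L). rewrite S_INR. specialize (IH (fun y Hy => H y (or_intror Hy))). specialize (H a (or_introl eq_refl)). lra.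
Qed.

Lemma Rpower_le_base x y z : 0 < x -> x <= y -> 0 < z -> Rpower x z <= Rpower y z.
Proof.
  intros Hx Hxy Hz. unfold Rpower. destruct Hxy as [H|H]; [|subst; lra].
  left. apply exp_increasing, Rmult_lt_compat_l; auto. apply ln_increasing; lra.
Qed.

Theorem corollary1p8 (G : Group) (alpha : R) :
  0 < alpha -> Rbar_lt (Finite alpha) (Lit G) ->
  forall N : nat, exists S : list G,
    NoDup S /\ (N <= length S)%nat /\ symmetric_set G S /\
    cay_colourable G S (Rpower (INR (length S)) (1 / alpha)).
Proof.
  intros Halp Hlit N.
  set (P := fun p => 0 < p /\ forall f : G -> C, T1 G f -> in_lp G p f).
  assert (Hp : exists p, alpha < p /\ ~ P p).
  { destruct (Glb_Rbar_correct P) as [Hlb _]. unfold Lit in Hlit. fold P in Hlit.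
    destruct (Glb_Rbar P) as [l| |]; simpl in Hlit.
    - exists ((alpha + l)/2). split; [lra|]. intros HP. specialize (Hlb _ HP). simpl in Hlb. lra.
    - exists (alpha + 1). split; [lra|]. intros HP. specialize (Hlb _ HP). simpl in Hlb. exact Hlb.
    - contradiction. }
  destruct Hp as [p [Hap HnP]].
  assert (Hf : exists f, T1 G f /\ ~ in_lp G p f).
  { apply NNPP; intros Hn. apply HnP. split; [lra|]. intros f Hf. apply NNPP; intros Hf'. apply Hn. exists f; auto. }
  destruct Hf as [f [[f1 [f2 [Hdec [[M1 HM1] [M2 HM2]]]]] Hnlp]].
  assert (HM1s : forall x y, Cmod (f1 x y) <= M1).
  { intros x y. specialize (HM1 x [y] ltac:(constructor; [intros []|constructor])). unfold lsum in HM1; simpl in HM1; lra. }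
  assert (HM2s : forall x y, Cmod (f2 x y) <= M2).
  { intros x y. specialize (HM2 y [x] ltac:(constructor; [intros []|constructor])). unfold lsum in HM2; simpl in HM2; lra. }
  set (B := M1 + M2).
  assert (HB : forall z, Cmod (f z) <= B).
  { intros z. assert (E := Hdec (gone G) (gmul G (gone G) z)). rewrite g_cancel, gmul_1l in E.
    rewrite E. eapply Rle_trans; [apply Cmod_triangle|]. unfold B. generalize (HM1s (gone G) z) (HM2s (gone G) z). lra. }
  assert (HB0 : 0 <= B) by (generalize (HB (gone G)) (Cmod_ge_0 (f (gone G))); lra).
  set (K := 7 * B + 1).
  destruct (level_claim G f B p alpha K (S N) Halp Hap ltac:(unfold K; lra) HB Hnlp)
    as [eps [Heps [A [HA [HAe HAlen]]]]].
  assert (HAne : A <> []).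
  { intros ->. rewrite S_INR in HAlen. change (INR (length (@nil G))) with 0 in HAlen.
    generalize (pos_INR N); unfold Rpower in HAlen; generalize (exp_pos (alpha * ln (K / eps))). lra. }
  assert (HepsB : eps <= B).
  { destruct A as [|a A0]; [congruence|]. apply Rle_trans with (Cmod (f a)); [apply HAe; left; auto|apply HB]. }
  set (A' := filter (fun a => dec (a <> gone G)) A).
  assert (HA'sub : forall a, In a A' -> In a A /\ a <> gone G).
  { intros a Ha'. apply filter_In in Ha'. destruct Ha' as [H1 H2]. split; auto. apply decT in H2; auto. }
  assert (HA'nd : NoDup A') by (apply NoDup_filter; auto).
  assert (HA'len : (length A <= length A' + 1)%nat).
  { rewrite <- (filter_length (fun a => dec (a <> gone G)) A). fold A'.
    assert (length (filter (fun x => negb (dec (x <> gone G))) A) <= length [gone G])%nat.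
    { apply NoDup_incl_length; [apply NoDup_filter; auto|].
      intros x Hx. apply filter_In in Hx. destruct Hx as [_ Hx].
      destruct (dec (x <> gone G)) eqn:E; [discriminate|]. apply decFn in E. left. apply NNPP; intros H; apply E; auto. }
    simpl in H. lia. }
  set (S0 := nodup (gdec G) (A' ++ map (ginv G) A')).
  assert (HSnd : NoDup S0) by apply NoDup_nodup.
  assert (HSlen : (length A' <= length S0)%nat).
  { apply NoDup_incl_length; auto. intros x Hx. apply nodup_In. apply in_or_app; auto. }
  assert (HSmem : forall s, In s S0 -> (In s A' \/ exists a, In a A' /\ s = ginv G a)).
  { intros s Hs. apply nodup_In in Hs. apply in_app_or in Hs. destruct Hs as [Hs|Hs]; auto.
    apply in_map_iff in Hs. destruct Hs as [a [<- Ha]]. right; eauto. }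
  assert (HSsym : symmetric_set G S0).
  { intros s Hs. apply nodup_In. destruct (HSmem s Hs) as [H|[a [Ha ->]]].
    - apply in_or_app; right. apply in_map; auto.
    - apply in_or_app; left. rewrite g_inv_inv. auto. }
  assert (HSe : forall s, In s S0 -> s <> gone G).
  { intros s Hs. destruct (HSmem s Hs) as [H|[a [Ha ->]]].
    - apply HA'sub; auto.
    - intros E. apply g_inv_e in E. apply HA'sub in Ha. tauto. }
  assert (HSf : forall s, In s S0 -> (In s A' \/ exists a, In a A' /\ s = ginv G a)) by auto.
  set (D := Z.to_nat (up (2 * B / eps))).
  assert (HD1 : 2 * B / eps <= INR D).
  { unfold D. destruct (archimed (2 * B / eps)) as [H1 H2].
    assert (0 <= 2 * B / eps) by (apply Rmult_le_pos; [lra| left; apply Rinv_0_lt_compat; lra]).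
    rewrite INR_IZR_INZ, Z2Nat.id; [lra|]. apply le_IZR. lra. }
  assert (HD2 : INR D <= 2 * B / eps + 1).
  { unfold D. destruct (archimed (2 * B / eps)) as [H1 H2].
    assert (0 <= 2 * B / eps) by (apply Rmult_le_pos; [lra| left; apply Rinv_0_lt_compat; lra]).
    rewrite INR_IZR_INZ, Z2Nat.id; [lra|]. apply le_IZR. lra. }
  set (Nrel := fun v y => eps / 2 <= Cmod (f1 v y) \/ eps / 2 <= Cmod (f2 y v)).
  set (adjG := fun x y => exists s, In s S0 /\ y = gmul G x s).
  assert (Hirr : forall x, ~ adjG x x).
  { intros x [s [Hs E]]. apply (HSe s Hs).
    assert (E2 : gmul G (ginv G x) x = gmul G (ginv G x) (gmul G x s)) by (rewrite <- E; reflexivity).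
    rewrite g_cancel, gmul_Vl in E2. auto. }
  assert (Hsplit : forall x y a, In a A -> gmul G (ginv G x) y = a -> Nrel x y \/ Nrel y x).
  { intros x y a Ha E. assert (Hfa := HAe a Ha). rewrite <- E, Hdec in Hfa.
    assert (Ht := Cmod_triangle (f1 x y) (f2 x y)).
    destruct (Rle_lt_dec (eps/2) (Cmod (f1 x y))).
    - left; left; auto.
    - right; right; lra. }
  assert (Horient : forall x y, adjG x y -> Nrel x y \/ Nrel y x).
  { intros x y [s [Hs ->]]. destruct (HSf s Hs) as [H|[a [Ha ->]]].
    - apply (Hsplit x (gmul G x s) s); [apply HA'sub; auto|]. apply g_cancel.
    - assert (Ex : x = gmul G (gmul G x (ginv G a)) a).
      { rewrite <- gmul_assoc, gmul_Vl, g_mul1r. reflexivity. }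
      destruct (Hsplit (gmul G x (ginv G a)) x a) as [H|H]; [apply HA'sub; auto| |auto|auto].
      rewrite Ex at 2. apply g_cancel. }
  assert (Hbound : forall v L, NoDup L -> (forall y, In y L -> Nrel v y) -> (length L <= D)%nat).
  { intros v L HL HLN.
    set (L1 := filter (fun y => dec (eps / 2 <= Cmod (f1 v y))) L).
    set (L2 := filter (fun y => negb (dec (eps / 2 <= Cmod (f1 v y)))) L).
    assert (HLl : (length L1 + length L2)%nat = length L) by apply filter_length.
    assert (H1 : INR (length L1) * (eps/2) <= M1).
    { eapply Rle_trans; [apply (lsum_lower (fun y => Cmod (f1 v y)))|apply HM1; apply NoDup_filter; auto].
      intros y Hy. apply filter_In in Hy. apply decT. tauto. }
    assert (H2 : INR (length L2) * (eps/2) <= M2).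
    { eapply Rle_trans; [apply (lsum_lower (fun x => Cmod (f2 x v)))|apply HM2; apply NoDup_filter; auto].
      intros y Hy. apply filter_In in Hy. destruct Hy as [Hy1 Hy2].
      destruct (dec (eps / 2 <= Cmod (f1 v y))) eqn:E; [discriminate|]. apply decFn in E.
      destruct (HLN y Hy1); tauto. }
    assert (H3 : INR (length L) * (eps / 2) <= B).
    { rewrite <- HLl, plus_INR, Rmult_plus_distr_r. unfold B. lra. }
    apply INR_le. apply Rle_trans with (2 * B / eps); [|auto].
    apply Rmult_le_reg_r with (eps / 2); [lra|]. 
    replace (2 * B / eps * (eps / 2)) with B by (field; lra). auto. }
  assert (Hloc : forall X : list G, NoDup X -> exists c : G -> nat, (forall v, (c v < 2 * D + 1)%nat) /\
     (forall x y, In x X -> In y X -> (exists s, In s S0 /\ y = gmul G x s) -> c x <> c y)).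
  { intros X HX. apply (fin_col G adjG Nrel D Hirr Horient Hbound (length X) X eq_refl HX). }
  assert (HS0ne : S0 <> []).
  { intros E. rewrite E in HSlen. simpl in HSlen. destruct A' eqn:EA; [|simpl in HSlen; lia].
    simpl in HA'len. rewrite S_INR in HAlen.
    assert (length A <= 1)%nat by lia.
    assert (INR (length A) <= 1) by (apply (le_INR _ 1); auto).
    generalize (pos_INR N); unfold Rpower in HAlen; generalize (exp_pos (alpha * ln (K / eps))). lra. }
  destruct (global_col G S0 (2 * D + 1) HSsym HS0ne Hloc) as [c [Hc1 Hc2]].
  assert (HSR : INR N + Rpower (K / eps) alpha <= INR (length S0)).
  { apply le_INR in HSlen. apply le_INR in HA'len. rewrite plus_INR in HA'len. simpl in HA'len.
    rewrite S_INR in HAlen. lra. }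
  assert (HKe : 0 < K / eps) by (unfold K; apply Rdiv_lt_0_compat; lra).
  assert (Hpow0 : 0 < Rpower (K / eps) alpha) by (unfold Rpower; apply exp_pos).
  exists S0. split; [auto|]. split.
  { assert (INR N < INR (length S0)) by lra. apply INR_lt in H. lia. }
  split; [auto|].
  exists c. split; [|intros g s Hs; apply Hc2; auto].
  intros g.
  set (t := Rpower (INR (length S0)) (1 / alpha)).
  assert (Ht : INR (2 * D + 1) <= t).
  { apply Rle_trans with (Rpower (Rpower (K / eps) alpha) (1 / alpha)).
    - rewrite Rpower_mult. replace (alpha * (1 / alpha)) with 1 by (field; lra). rewrite Rpower_1 by auto.
      rewrite plus_INR, mult_INR. simpl (INR 2). simpl (INR 1).
      apply Rle_trans with (4 * B / eps + 3); [unfold Rdiv in *; nra|].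
      unfold K. apply Rmult_le_reg_r with eps; [lra|].
      unfold Rdiv. rewrite !Rmult_plus_distr_r, !Rmult_assoc, !Rinv_l by lra. lra.
    - apply Rpower_le_base; auto; [|apply Rdiv_lt_0_compat; lra].
      generalize (pos_INR N); lra. }
  unfold Int_part. destruct (archimed t) as [Hu _].
  assert (Hz : (Z.of_nat (2 * D + 1) < up t)%Z).
  { apply lt_IZR. rewrite <- INR_IZR_INZ. lra. }
  specialize (Hc1 g). lia.
Qed.
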